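(* In the two-cut setting of the context, let $v,z\in\mathbb C$ with $v\ne z$, $v,z$ not poles of $h$ and not in $\mathcal L$. Let $\Omega_k,\Omega^{\varepsilon}_k$ denote the integrals below with all $u_\alpha$-contours equal to $\Gamma(\mathcal L)$ (enclosing $\mathcal L$ but not $v$, $z$ or other poles of $h$), and let $\Omega^{(v)}_k,\Omega^{\varepsilon(v)}_k$ denote the same integrals with all $u_\alpha$-contours equal to a contour $\Gamma^{(v)}(\mathcal L)$ enclosing $\mathcal L\cup\{v\}$ but not $z$ or other poles of $h$. Then $$\Omega_r(v,z)=\Omega^{(v)}_r(v,z)+r(z-v)h(v)\,\Omega^{+1}_{r-1}(v,z),$$ $$\Omega^{-1}_{r+1}(v,z)=\Omega^{-1(v)}_{r+1}(v,z)+(r+1)\frac{h(v)}{z-v}\,\Omega_r(z,v).$$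
   Context: Two-cut hexagon: integers $b,c,d\ge1$, $m_1,m_2,n_1,n_2\ge1$ with $m_1+m_2=n_1+n_2$, $N=b+c$, $r=b-d\ge0$, $\rho=n_1-m_1+b-d\ge0$, $\Sigma=m_1-n_1+c-d\ge0$. With $(a)_k=a(a+1)\cdots(a+k-1)$, $(a)_0=1$, and $x_1=m_1+m_2-1$, $x_{c+1}=n_1-c-1$, $x_{c+d}=n_1-c-d$, $x_{c+d+1}=-c-d-1$, $y_d=m_1-d$: $Q_{\mathcal L}(z)=(z-x_{c+d+1})_b$, $Q_{\mathcal R}(z)=(z-x_1)_c$, $P_\rho(z)=(z-x_{c+d}+1)_\rho$, $P_\Sigma(z)=(z-y_d+1)_\Sigma$, and $h(u)=\frac{Q_{\mathcal R}(u)}{P_\rho(u)P_\Sigma(u)Q_{\mathcal L}(u)}$. $\mathcal L=\{-d-N,\dots,-d-c-1\}$ is the root set of $Q_{\mathcal L}$. With $\Delta_k(u)=\prod_{i<j}(u_i-u_j)$ and contours $\Gamma$ for the $u_\alpha$: $\Omega_k(v,z)=\bigl(\prod_{\alpha=1}^k\oint_\Gamma\frac{du_\alpha h(u_\alpha)}{2\pi i}\frac{z-u_\alpha}{v-u_\alpha}\bigr)\Delta_k^2(u)$, $\Omega^{\varepsilon}_k(v,z)=\bigl(\prod_{\alpha=1}^k\oint_\Gamma\frac{du_\alpha h(u_\alpha)}{2\pi i}(v-u_\alpha)^\varepsilon(z-u_\alpha)^\varepsilon\bigr)\Delta_k^2(u)$ for $\varepsilon=\pm1$ (empty products and $\Delta_0$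 equal $1$). *)

(* Defs.v *)
From Stdlib Require Import Reals ZArith List ClassicalEpsilon.
From Coquelicot Require Import Coquelicot.
Open Scope C_scope.

Fixpoint poch (a : C) (k : nat) : C :=
  match k with
  | O => 1
  | S k' => poch a k' * (a + RtoC (INR k'))
  end.

Definition CZ (n : Z) : C := RtoC (IZR n).

Definition rhoZ (b d m1 n1 : nat) : Z :=
  (Z.of_nat n1 - Z.of_nat m1 + Z.of_nat b - Z.of_nat d)%Z.
Definition SigmaZ (c d m1 n1 : nat) : Z :=
  (Z.of_nat m1 - Z.of_nat n1 + Z.of_nat c - Z.of_nat d)%Z.

Definition x1 (m1 m2 : nat) : Z := (Z.of_nat m1 + Z.of_nat m2 - 1)%Z.
Definition xcd (c d n1 : nat) : Z := (Z.of_nat n1 - Z.of_nat c - Z.of_nat d)%Z.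
Definition xcd1 (c d : nat) : Z := (- Z.of_nat c - Z.of_nat d - 1)%Z.
Definition yd (d m1 : nat) : Z := (Z.of_nat m1 - Z.of_nat d)%Z.

Definition QL (b c d : nat) (z : C) : C := poch (z - CZ (xcd1 c d)) b.
Definition QR (c m1 m2 : nat) (z : C) : C := poch (z - CZ (x1 m1 m2)) c.
Definition Prho (b c d m1 n1 : nat) (z : C) : C :=
  poch (z - CZ (xcd c d n1) + 1) (Z.to_nat (rhoZ b d m1 n1)).
Definition PSigma (c d m1 n1 : nat) (z : C) : C :=
  poch (z - CZ (yd d m1) + 1) (Z.to_nat (SigmaZ c d m1 n1)).

Definition hform (b c d m1 m2 n1 : nat) (u : C) : C :=
  QR c m1 m2 u / (Prho b c d m1 n1 u * PSigma c d m1 n1 u * QL b c d u).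

(* h as the rational function: at removable points its value is the limit. *)
Definition has_lim (f : C -> C) (a l : C) : Prop :=
  filterlim f (locally' a) (locally l).

Definition hfun (b c d m1 m2 n1 : nat) (u : C) : C :=
  let f := hform b c d m1 m2 n1 in
  match excluded_middle_informative (exists l, has_lim f u l) with
  | left H => proj1_sig (constructive_indefinite_description _ H)
  | right _ => f u
  end.

Definition is_pole (b c d m1 m2 n1 : nat) (a : C) : Prop :=
  ~ (exists l, has_lim (hform b c d m1 m2 n1) a l).

Definition inL (b c d : nat) (u : C) : Prop :=
  exists j : nat, (j < b)%nat /\ u = CZ (- Z.of_nat d - Z.of_nat c - 1 - Z.of_nat j)%Z.

(* Closed C^1 contours parametrized on [0,1] (piecewise-smooth contours can be
   reparametrized to be C^1), with derivative gamma'. *)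
Definition contour (g g' : R -> C) : Prop :=
  (forall t : R, @is_derive R_AbsRing C_R_NormedModule g t (g' t)) /\
  (forall t : R, @continuous R_UniformSpace C_UniformSpace g' t) /\
  g 0%R = g 1%R.

Definition cint (g g' : R -> C) (f : C -> C) : C :=
  @RInt C_R_CompleteNormedModule (fun t => f (g t) * g' t) 0%R 1%R / (2 * RtoC PI * Ci).

Definition winding (g g' : R -> C) (a : C) : C :=
  cint g g' (fun u => / (u - a)).

Definition on_contour (g : R -> C) (a : C) : Prop := exists t, (0 <= t <= 1)%R /\ g t = a.

(* k-fold integral, all variables on the same contour; u_1 is the outermost *)
Fixpoint mcint (g g' : R -> C) (k : nat) (F : list C -> C) : C :=
  match k with
  | O => F nil
  | S k' => cint g g' (fun u => mcint g g' k' (fun us => F (u :: us)))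
  end.

Fixpoint prodC (l : list C) : C :=
  match l with nil => 1 | x :: l' => x * prodC l' end.

Fixpoint vdm (us : list C) : C :=
  match us with
  | nil => 1
  | u :: us' => prodC (map (fun w => u - w) us') * vdm us'
  end.

Definition Omega (h : C -> C) (g g' : R -> C) (k : nat) (v z : C) : C :=
  mcint g g' k (fun us =>
    prodC (map (fun u => h u * ((z - u) / (v - u))) us) * (vdm us * vdm us)).

Definition OmegaP (h : C -> C) (g g' : R -> C) (k : nat) (v z : C) : C :=
  mcint g g' k (fun us =>
    prodC (map (fun u => h u * ((v - u) * (z - u))) us) * (vdm us * vdm us)).

Definition OmegaM (h : C -> C) (g g' : R -> C) (k : nat) (v z : C) : C :=
  mcint g g' k (fun us =>
    prodC (map (fun u => h u * (/ (v - u) * / (z - u))) us) * (vdm us * vdm us)).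

Definition GammaL (b c d m1 m2 n1 : nat) (v z : C) (g g' : R -> C) : Prop :=
  contour g g' /\
  (forall a, is_pole b c d m1 m2 n1 a \/ a = v \/ a = z -> ~ on_contour g a) /\
  (forall a, inL b c d a -> winding g g' a = 1) /\
  winding g g' v = 0 /\ winding g g' z = 0 /\
  (forall a, is_pole b c d m1 m2 n1 a -> ~ inL b c d a -> winding g g' a = 0).

Definition GammaLv (b c d m1 m2 n1 : nat) (v z : C) (g g' : R -> C) : Prop :=
  contour g g' /\
  (forall a, is_pole b c d m1 m2 n1 a \/ a = v \/ a = z -> ~ on_contour g a) /\
  (forall a, inL b c d a -> winding g g' a = 1) /\
  winding g g' v = 1 /\ winding g g' z = 0 /\
  (forall a, is_pole b c d m1 m2 n1 a -> ~ inL b c d a -> winding g g' a = 0).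

(* Main.v *)
Require Import Defs.
From Stdlib Require Import Reals ZArith List.
From Coquelicot Require Import Coquelicot.
From Stdlib Require Import Lra Lia FunctionalExtensionality Classical ClassicalEpsilon.
Open Scope C_scope.

Lemma der_pair (f1 f2 : R -> R) (t l1 l2 : R) :
  is_derive f1 t l1 -> is_derive f2 t l2 ->
  @is_derive R_AbsRing C_R_NormedModule (fun s => (f1 s, f2 s) : C) t ((l1, l2) : C).
Proof.
  intros H1 H2.
  unfold is_derive in *.
  pose proof (@filterdiff_comp_2 R_AbsRing R_NormedModule R_NormedModule R_NormedModule
    (prod_NormedModule R_AbsRing R_NormedModule R_NormedModule) (locally t) _
    f1 f2 (fun a b => (a, b)) _ _ (fun a b => (a, b)) H1 H2) as H.
  apply H.
  apply filterdiff_linear.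
  apply is_linear_prod; [apply is_linear_fst | apply is_linear_snd].
Qed.

Lemma der_fst (f : R -> C) (t : R) (l : C) :
  @is_derive R_AbsRing C_R_NormedModule f t l ->
  is_derive (fun s => fst (f s)) t (fst l).
Proof.
  intros H. unfold is_derive in *.
  eapply filterdiff_ext_lin.
  - apply (@filterdiff_comp R_AbsRing R_NormedModule C_R_NormedModule R_NormedModule (locally t) _ f (fun p : C => fst p) _ (fun p : C => fst p) H).
    apply filterdiff_linear. apply (@is_linear_fst R_AbsRing R_NormedModule R_NormedModule).
  - intros y. simpl. reflexivity.
Qed.

Lemma der_snd (f : R -> C) (t : R) (l : C) :
  @is_derive R_AbsRing C_R_NormedModule f t l ->
  is_derive (fun s => snd (f s)) t (snd l).
Proof.
  intros H. unfold is_derive in *.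
  eapply filterdiff_ext_lin.
  - apply (@filterdiff_comp R_AbsRing R_NormedModule C_R_NormedModule R_NormedModule (locally t) _ f (fun p : C => snd p) _ (fun p : C => snd p) H).
    apply filterdiff_linear. apply (@is_linear_snd R_AbsRing R_NormedModule R_NormedModule).
  - intros y. simpl. reflexivity.
Qed.

Lemma C_ext (x y : C) : fst x = fst y -> snd x = snd y -> x = y.
Proof. destruct x, y; simpl; intros; subst; auto. Qed.

Lemma der_Cmult (f k : R -> C) (t : R) (lf lk : C) :
  @is_derive R_AbsRing C_R_NormedModule f t lf ->
  @is_derive R_AbsRing C_R_NormedModule k t lk ->
  @is_derive R_AbsRing C_R_NormedModule (fun s => f s * k s) t (lf * k t + f t * lk).
Proof.
  intros Hf Hk.
  pose proof (der_fst _ _ _ Hf) as Hf1. pose proof (der_snd _ _ _ Hf) as Hf2.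
  pose proof (der_fst _ _ _ Hk) as Hk1. pose proof (der_snd _ _ _ Hk) as Hk2.
  pose proof (der_pair _ _ _ _ _
    (is_derive_minus _ _ _ _ _ (Derive.is_derive_mult _ _ _ _ _ Hf1 Hk1) (Derive.is_derive_mult _ _ _ _ _ Hf2 Hk2))
    (is_derive_plus _ _ _ _ _ (Derive.is_derive_mult _ _ _ _ _ Hf1 Hk2) (Derive.is_derive_mult _ _ _ _ _ Hf2 Hk1))) as H.
  eapply is_derive_ext; [|replace (lf * k t + f t * lk) with
    ((minus (fst lf * fst (k t) + fst (f t) * fst lk) (snd lf * snd (k t) + snd (f t) * snd lk),
      plus (fst lf * snd (k t) + fst (f t) * snd lk) (snd lf * fst (k t) + snd (f t) * fst lk))%R : C); [exact H|]].
  - intros s. simpl. reflexivity.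
  - apply C_ext; simpl; unfold minus, plus, opp; simpl; ring.
Qed.

Lemma der_Cinv (f : R -> C) (t : R) (lf : C) :
  @is_derive R_AbsRing C_R_NormedModule f t lf -> f t <> 0 ->
  @is_derive R_AbsRing C_R_NormedModule (fun s => / f s) t (- lf / (f t * f t)).
Proof.
  intros Hf Hnz.
  pose proof (der_fst _ _ _ Hf) as Hf1. pose proof (der_snd _ _ _ Hf) as Hf2.
  assert (Hd : (fst (f t) ^ 2 + snd (f t) ^ 2 <> 0)%R).
  { intro E. apply Hnz. destruct (f t) as [a b]. simpl in E.
    assert (a = 0%R) by nra. assert (b = 0%R) by nra. subst. reflexivity. }
  pose proof (is_derive_plus _ _ _ _ _ (is_derive_pow _ 2 _ _ Hf1) (is_derive_pow _ 2 _ _ Hf2)) as HD.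
  simpl in HD.
  pose proof (der_pair _ _ _ _ _
     (is_derive_div _ _ _ _ _ Hf1 HD Hd)
     (is_derive_div _ _ _ _ _ (is_derive_opp _ _ _ Hf2) HD Hd)) as H.
  eapply is_derive_ext; [|eapply (eq_ind _ (fun l => is_derive _ t l) H)].
  - intros s. simpl. reflexivity.
  - destruct (f t) as [a b] eqn:E. destruct lf as [a' b']. simpl in *.
    unfold plus, opp, scal in *; simpl in *; unfold mult; simpl.
    apply C_ext; simpl; field; nra.
Qed.

Section Cont.
Context {U : UniformSpace}.

Lemma cont_pair (f1 f2 : U -> R) (x : U) :
  continuous f1 x -> continuous f2 x -> @continuous U C_UniformSpace (fun y => (f1 y, f2 y) : C) x.
Proof.
  intros H1 H2.
  apply (@continuous_comp_2 U R_UniformSpace R_UniformSpace C_UniformSpace f1 f2 (fun a b => (a,b) : C) x H1 H2).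
  eapply filterlim_ext; [|apply filterlim_id].
  intros [a b]; reflexivity.
Qed.

Lemma cont_fst (f : U -> C) (x : U) :
  @continuous U C_UniformSpace f x -> continuous (fun y => fst (f y)) x.
Proof.
  intros H. apply (@continuous_comp U C_UniformSpace R_UniformSpace f (fun p : C => fst p)); auto.
  destruct (f x) as [a b]. apply (@continuous_fst R_UniformSpace R_UniformSpace).
Qed.

Lemma cont_snd (f : U -> C) (x : U) :
  @continuous U C_UniformSpace f x -> continuous (fun y => snd (f y)) x.
Proof.
  intros H. apply (@continuous_comp U C_UniformSpace R_UniformSpace f (fun p : C => snd p)); auto.
  destruct (f x) as [a b]. apply (@continuous_snd R_UniformSpace R_UniformSpace).
Qed.

Lemma cont_Rmult (f k : U -> R) x : continuous f x -> continuous k x -> continuous (fun y => f y * k y)%R x.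
Proof. intros; apply (@continuous_mult U R_AbsRing); auto. Qed.
Lemma cont_Rplus (f k : U -> R) x : continuous f x -> continuous k x -> continuous (fun y => f y + k y)%R x.
Proof. intros; apply (@continuous_plus U R_AbsRing R_NormedModule); auto. Qed.
Lemma cont_Ropp (f : U -> R) x : continuous f x -> continuous (fun y => - f y)%R x.
Proof. intros; apply (@continuous_opp U R_AbsRing R_NormedModule); auto. Qed.

Lemma cont_Cmult (f k : U -> C) (x : U) :
  @continuous U C_UniformSpace f x -> @continuous U C_UniformSpace k x ->
  @continuous U C_UniformSpace (fun y => f y * k y) x.
Proof.
  intros Hf Hk.
  pose proof (cont_fst _ _ Hf). pose proof (cont_snd _ _ Hf).
  pose proof (cont_fst _ _ Hk). pose proof (cont_snd _ _ Hk).
  eapply filterlim_ext; [|apply (cont_pair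
    (fun y => fst (f y) * fst (k y) + - (snd (f y) * snd (k y)))%R
    (fun y => fst (f y) * snd (k y) + snd (f y) * fst (k y))%R)].
  - intros y. reflexivity.
  - apply cont_Rplus; [apply cont_Rmult; auto| apply cont_Ropp, cont_Rmult; auto].
  - apply cont_Rplus; apply cont_Rmult; auto.
Qed.

Lemma cont_Cplus (f k : U -> C) (x : U) :
  @continuous U C_UniformSpace f x -> @continuous U C_UniformSpace k x ->
  @continuous U C_UniformSpace (fun y => f y + k y) x.
Proof.
  intros Hf Hk.
  pose proof (cont_fst _ _ Hf). pose proof (cont_snd _ _ Hf).
  pose proof (cont_fst _ _ Hk). pose proof (cont_snd _ _ Hk).
  eapply filterlim_ext; [|apply (cont_pair
    (fun y => fst (f y) + fst (k y))%R (fun y => snd (f y) + snd (k y))%R)].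
  - intros y. reflexivity.
  - apply cont_Rplus; auto.
  - apply cont_Rplus; auto.
Qed.

Lemma cont_Copp (f : U -> C) (x : U) :
  @continuous U C_UniformSpace f x -> @continuous U C_UniformSpace (fun y => - f y) x.
Proof.
  intros Hf.
  pose proof (cont_fst _ _ Hf). pose proof (cont_snd _ _ Hf).
  eapply filterlim_ext; [|apply (cont_pair
    (fun y => - fst (f y))%R (fun y => - snd (f y))%R)].
  - intros y. reflexivity.
  - apply cont_Ropp; auto.
  - apply cont_Ropp; auto.
Qed.

Lemma cont_Cminus (f k : U -> C) (x : U) :
  @continuous U C_UniformSpace f x -> @continuous U C_UniformSpace k x ->
  @continuous U C_UniformSpace (fun y => f y - k y) x.
Proof. intros; apply cont_Cplus; auto; apply cont_Copp; auto. Qed.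

Lemma cont_const (c : C) (x : U) : @continuous U C_UniformSpace (fun _ => c) x.
Proof. apply filterlim_const. Qed.

Lemma cont_Cinv (f : U -> C) (x : U) :
  @continuous U C_UniformSpace f x -> f x <> 0 -> @continuous U C_UniformSpace (fun y => / f y) x.
Proof.
  intros Hf Hnz.
  pose proof (cont_fst _ _ Hf) as H1. pose proof (cont_snd _ _ Hf) as H2.
  assert (Hd : (fst (f x) ^ 2 + snd (f x) ^ 2 <> 0)%R).
  { intro E. apply Hnz. destruct (f x) as [a b]. simpl in E.
    assert (a = 0%R) by nra. assert (b = 0%R) by nra. subst. reflexivity. }
  assert (HD : continuous (fun y => fst (f y) ^ 2 + snd (f y) ^ 2)%R x).
  { apply (continuous_ext (fun y => fst (f y) * fst (f y) + snd (f y) * snd (f y))%R).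
    - intros y; simpl; ring.
    - apply cont_Rplus; apply cont_Rmult; auto. }
  eapply filterlim_ext; [|apply (cont_pair
    (fun y => fst (f y) * / (fst (f y) ^ 2 + snd (f y) ^ 2))%R (fun y => - snd (f y) * / (fst (f y) ^ 2 + snd (f y) ^ 2))%R)].
  - intros y. reflexivity.
  - apply cont_Rmult; auto. apply (continuous_comp (fun y => fst (f y) ^ 2 + snd (f y) ^ 2)%R (fun r => / r)%R); auto; apply continuous_Rinv; auto.
  - apply cont_Rmult; [apply cont_Ropp; auto|]. apply (continuous_comp (fun y => fst (f y) ^ 2 + snd (f y) ^ 2)%R (fun r => / r)%R); auto; apply continuous_Rinv; auto.
Qed.

End Cont.

Definition evL (L : list (C * nat)) (u : C) : C :=
  fold_right (fun p acc => fst p * u ^ snd p + acc) 0 L.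
Definition isP (f : C -> C) := exists L, forall u, f u = evL L u.

Lemma evL_app L1 L2 u : evL (L1 ++ L2) u = evL L1 u + evL L2 u.
Proof. induction L1 as [|p L1 IH]; simpl; [ring|rewrite IH; ring]. Qed.

Lemma Cpow_add (u : C) a b : u ^ (a + b) = u ^ a * u ^ b.
Proof. induction a; simpl; [ring|rewrite IHa; ring]. Qed.

Definition mulL (L1 L2 : list (C*nat)) :=
  flat_map (fun p => map (fun q => (fst p * fst q, (snd p + snd q)%nat)) L2) L1.

Lemma evL_mul L1 L2 u : evL (mulL L1 L2) u = evL L1 u * evL L2 u.
Proof.
  induction L1 as [|p L1 IH]; simpl; [ring|].
  unfold mulL in *; simpl. rewrite evL_app, IH.
  assert (H: forall L2, evL (map (fun q => (fst p * fst q, (snd p + snd q)%nat)) L2) u = fst p * u ^ snd p * evL L2 u).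
  { clear. induction L2 as [|q L2 IH2]. simpl; ring. simpl. rewrite IH2, Cpow_add. ring. }
  rewrite H; ring.
Qed.

Lemma isP_const c : isP (fun _ => c).
Proof. exists ((c,0%nat)::nil). intros u; simpl; ring. Qed.
Lemma isP_id : isP (fun u => u).
Proof. exists ((RtoC 1,1%nat)::nil). intros u; simpl; ring. Qed.
Lemma isP_plus f k : isP f -> isP k -> isP (fun u => f u + k u).
Proof. intros [L1 H1] [L2 H2]. exists (L1 ++ L2). intros u. rewrite evL_app, H1, H2. auto. Qed.
Lemma isP_mult f k : isP f -> isP k -> isP (fun u => f u * k u).
Proof. intros [L1 H1] [L2 H2]. exists (mulL L1 L2). intros u. rewrite evL_mul, H1, H2. auto. Qed.
Lemma isP_ext f k : (forall u, f u = k u) -> isP f -> isP k.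
Proof. intros E [L H]. exists L. intros u; rewrite <- E; auto. Qed.
Lemma isP_opp f : isP f -> isP (fun u => - f u).
Proof. intros H. apply (isP_ext (fun u => (-1) * f u)). intros; ring. apply isP_mult; auto; apply isP_const. Qed.
Lemma isP_minus f k : isP f -> isP k -> isP (fun u => f u - k u).
Proof. intros; apply isP_plus; auto; apply isP_opp; auto. Qed.
Lemma isP_pow f n : isP f -> isP (fun u => (f u) ^ n).
Proof. intros H; induction n; simpl. apply isP_const. apply isP_mult; auto. Qed.
Lemma isP_evL L : isP (evL L).
Proof. exists L; auto. Qed.

Lemma isP_div f a : isP f -> exists q, isP q /\ forall u, f u = (u - a) * q u + f a.
Proof.
  intros [L HL].
  assert (Hm : forall n : nat, exists q, isP q /\ forall u, u ^ n = (u - a) * q u + a ^ n).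
  { induction n as [|n [q [Hq E]]].
    - exists (fun _ => 0). split. apply isP_const. intros; simpl; ring.
    - exists (fun u => u * q u + a ^ n). split.
      + apply isP_plus. apply isP_mult; auto. apply isP_id. apply isP_const.
      + intros u; simpl. rewrite E. ring. }
  assert (H : forall L, exists q, isP q /\ forall u, evL L u = (u - a) * q u + evL L a).
  { induction L0 as [|p L0 [q [Hq E]]].
    - exists (fun _ => 0). split. apply isP_const. intros; simpl; ring.
    - destruct (Hm (snd p)) as [q1 [Hq1 E1]].
      exists (fun u => fst p * q1 u + q u). split.
      + apply isP_plus; auto. apply isP_mult; auto. apply isP_const.
      + intros u; simpl. rewrite E, E1. ring. }
  destruct (H L) as [q [Hq E]]. exists q. split; auto.
  intros u. rewrite !HL. apply E.
Qed.

Definition lp (A : list C) (u : C) : C := fold_right (fun a acc => (u - a) * acc) 1 A.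

Lemma isP_lp A : isP (lp A).
Proof. induction A; simpl. apply isP_const. apply isP_mult; auto. apply isP_minus. apply isP_id. apply isP_const. Qed.

Lemma lp_app A B u : lp (A ++ B) u = lp A u * lp B u.
Proof. induction A; simpl; [ring| rewrite IHA; ring]. Qed.

Lemma lp_nz A u : (forall a, In a A -> u <> a) -> lp A u <> 0.
Proof.
  induction A as [|a A IH]; simpl; intros H.
  - apply C1_nz.
  - apply Cmult_neq_0. apply Cminus_eq_contra. apply H; auto. apply IH; auto.
Qed.

Lemma lp_repeat a m u : lp (repeat a m) u = (u - a) ^ m.
Proof. induction m; simpl; auto. rewrite IHm; auto. Qed.

Lemma is_RInt_Cmult (f : R -> C) (a b : R) (l c : C) :
  @is_RInt C_R_NormedModule f a b l ->
  @is_RInt C_R_NormedModule (fun t => c * f t) a b (c * l).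
Proof.
  intros H.
  pose proof (@is_RInt_fct_extend_fst R_NormedModule R_NormedModule f a b l H) as H1.
  pose proof (@is_RInt_fct_extend_snd R_NormedModule R_NormedModule f a b l H) as H2.
  apply (@is_RInt_fct_extend_pair R_NormedModule R_NormedModule).
  - simpl.
    eapply is_RInt_ext; [| apply (@is_RInt_minus R_NormedModule); [apply (@is_RInt_scal R_NormedModule _ _ _ (fst c) _ H1) | apply (@is_RInt_scal R_NormedModule _ _ _ (snd c) _ H2)]].
    intros; simpl. unfold minus, plus, opp, scal; simpl; unfold mult; simpl. ring.
  - simpl.
    eapply is_RInt_ext; [| apply (@is_RInt_plus R_NormedModule); [apply (@is_RInt_scal R_NormedModule _ _ _ (fst c) _ H2) | apply (@is_RInt_scal R_NormedModule _ _ _ (snd c) _ H1)]].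
    intros; simpl. unfold minus, plus, opp, scal; simpl; unfold mult; simpl. ring.
Qed.

Section Contour.
Variables (g g' : R -> C).
Hypothesis Hc : contour g g'.

Lemma cont_g t : @continuous R_UniformSpace C_UniformSpace g t.
Proof.
  destruct Hc as [Hd _].
  apply (@ex_derive_continuous R_AbsRing C_R_NormedModule). exists (g' t). apply Hd.
Qed.

Lemma cont_g' t : @continuous R_UniformSpace C_UniformSpace g' t.
Proof. destruct Hc as [_ [H _]]. apply H. Qed.

Lemma cont_pow_comp (f : R -> C) n t : @continuous R_UniformSpace C_UniformSpace f t ->
  @continuous R_UniformSpace C_UniformSpace (fun s => (f s) ^ n) t.
Proof.
  intros H; induction n; simpl. apply cont_const. apply cont_Cmult; auto.
Qed.

Lemma cont_poly_g P t : isP P -> @continuous R_UniformSpace C_UniformSpace (fun s => P (g s)) t.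
Proof.
  intros [L HL].
  apply (continuous_ext (fun s => evL L (g s))). intros; rewrite HL; auto.
  clear HL. induction L as [|p L IH]; simpl. apply cont_const.
  apply cont_Cplus; auto. apply cont_Cmult. apply cont_const. apply cont_pow_comp. apply cont_g.
Qed.

Definition ong (A : list C) := forall a t, In a A -> (0 <= t <= 1)%R -> g t <> a.

Lemma ong_lp A t : ong A -> (0 <= t <= 1)%R -> lp A (g t) <> 0.
Proof. intros H Ht. apply lp_nz. intros a Ha E. apply (H a t Ha Ht). auto. Qed.

Definition PR (P : C -> C) (A : list C) (u : C) : C := P u * / lp A u.

Definition exG (F : C -> C) := ex_RInt (V := C_R_CompleteNormedModule) (fun t => F (g t) * g' t) 0 1.

Lemma exG_PR P A : isP P -> ong A -> exG (PR P A).
Proof.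
  intros HP HA. unfold exG, PR.
  apply ex_RInt_continuous. intros t Ht.
  rewrite Rmin_left, Rmax_right in Ht by lra.
  apply cont_Cmult; [apply cont_Cmult|].
  - apply cont_poly_g; auto.
  - apply cont_Cinv. apply cont_poly_g. apply isP_lp. apply ong_lp; auto.
  - apply cont_g'.
Qed.

Lemma exG_ext F G : (forall t, (0 <= t <= 1)%R -> F (g t) = G (g t)) -> exG G -> exG F.
Proof.
  intros E H. unfold exG in *. eapply ex_RInt_ext; [|exact H].
  intros t Ht. rewrite Rmin_left, Rmax_right in Ht by lra. rewrite E; auto. lra.
Qed.

Lemma cint_ext F G : (forall t, (0 <= t <= 1)%R -> F (g t) = G (g t)) -> cint g g' F = cint g g' G.
Proof.
  intros E. unfold cint. f_equal. apply RInt_ext.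
  intros t Ht. rewrite Rmin_left, Rmax_right in Ht by lra. rewrite E; auto. lra.
Qed.

Lemma cint_plus F G : exG F -> exG G -> cint g g' (fun u => F u + G u) = cint g g' F + cint g g' G.
Proof.
  intros [lF HF] [lG HG]. unfold cint.
  assert (H : @is_RInt C_R_NormedModule (fun t => (F (g t) + G (g t)) * g' t) 0 1 (lF + lG)).
  { eapply is_RInt_ext; [|apply (@is_RInt_plus C_R_NormedModule _ _ _ _ _ _ HF HG)].
    intros; simpl. change (@plus C_R_NormedModule ?a ?b) with (Cplus a b). ring. }
  rewrite (@is_RInt_unique C_R_CompleteNormedModule _ _ _ _ H), (is_RInt_unique _ _ _ _ HF), (is_RInt_unique _ _ _ _ HG).
  unfold Cdiv; ring.
Qed.

Lemma cint_scal c F : exG F -> cint g g' (fun u => c * F u) = c * cint g g' F.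
Proof.
  intros [l Hl]. unfold cint.
  assert (H : @is_RInt C_R_NormedModule (fun t => (c * F (g t)) * g' t) 0 1 (c * l)).
  { eapply is_RInt_ext; [|apply (is_RInt_Cmult _ _ _ _ c Hl)]. intros; simpl; ring. }
  rewrite (@is_RInt_unique C_R_CompleteNormedModule _ _ _ _ H).
  rewrite (is_RInt_unique _ _ _ _ Hl). unfold Cdiv; ring.
Qed.

Lemma exG_plus F G : exG F -> exG G -> exG (fun u => F u + G u).
Proof.
  intros HF HG. unfold exG. eapply ex_RInt_ext; [|apply (@ex_RInt_plus C_R_NormedModule _ _ _ _ HF HG)].
  intros; simpl. change (plus ?a ?b) with (Cplus a b). ring.
Qed.

Lemma exG_scal c F : exG F -> exG (fun u => c * F u).
Proof.
  intros [l Hl]. exists (c * l). eapply is_RInt_ext; [|apply (is_RInt_Cmult _ _ _ _ c Hl)].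
  intros; simpl; ring.
Qed.

End Contour.

Ltac cring := match goal with |- ?a = ?b => change (@eq C a b); ring end.

Lemma der_subc (f : R -> C) t (l a : C) :
  @is_derive R_AbsRing C_R_NormedModule f t l ->
  @is_derive R_AbsRing C_R_NormedModule (fun s => f s - a) t l.
Proof.
  intros H.
  pose proof (@is_derive_plus R_AbsRing C_R_NormedModule f (fun _ => opp a) t l zero H (is_derive_const _ _)) as H2.
  rewrite plus_zero_r in H2. exact H2.
Qed.

Lemma der_powS (f : R -> C) t (l : C) n :
  @is_derive R_AbsRing C_R_NormedModule f t l ->
  @is_derive R_AbsRing C_R_NormedModule (fun s => (f s) ^ (S n)) t (RtoC (INR (S n)) * (f t) ^ n * l).
Proof.
  intros H. induction n.
  - apply (is_derive_ext f). intros; simpl; cring.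
    replace (RtoC (INR 1) * f t ^ 0 * l) with l. exact H. simpl. ring.
  - apply (is_derive_ext (fun s => f s * f s ^ S n)). intros; simpl; cring.
    replace (RtoC (INR (S (S n))) * f t ^ S n * l) with (l * f t ^ S n + f t * (RtoC (INR (S n)) * f t ^ n * l)).
    apply der_Cmult; auto.
    rewrite (S_INR (S n)). rewrite RtoC_plus. simpl. ring.
Qed.

Section FTC.
Variables (g g' : R -> C).
Hypothesis Hc : contour g g'.

Lemma INR_S_nz n : RtoC (INR (S n)) <> 0.
Proof. intro E. apply (not_0_INR (S n)); auto. injection E; auto. Qed.

Lemma cint_pow a n : cint g g' (fun u => (u - a) ^ n) = 0.
Proof.
  pose proof Hc as [Hd [Hc' Hgg]].
  pose proof (@is_RInt_derive C_R_CompleteNormedModule (fun t => (g t - a) ^ (S n))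
     (fun t => RtoC (INR (S n)) * (g t - a) ^ n * g' t) 0 1) as H1.
  assert (H1' : @is_RInt C_R_NormedModule (fun t => RtoC (INR (S n)) * (g t - a) ^ n * g' t) 0 1 (RtoC 0)).
  { replace (RtoC 0) with (minus ((g 1 - a) ^ (S n)) ((g 0 - a) ^ (S n))).
    apply H1.
    - intros x _. apply der_powS. apply der_subc. apply Hd.
    - intros x _. apply cont_Cmult; [apply cont_Cmult|].
      apply cont_const. apply cont_pow_comp. apply cont_Cminus. apply (cont_g g g' Hc). apply cont_const.
      apply (cont_g' g g' Hc).
    - rewrite Hgg. change (minus ?x ?y) with (Cminus x y). cring. }
  pose proof (is_RInt_Cmult _ _ _ _ (/ RtoC (INR (S n))) H1') as H2.
  assert (H3 : @is_RInt C_R_NormedModule (fun t => (g t - a) ^ n * g' t) 0 1 (RtoC 0)).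
  { eapply is_RInt_ext; [|replace (RtoC 0) with (/ RtoC (INR (S n)) * RtoC 0); [exact H2|ring]].
    intros x _. simpl. field. apply INR_S_nz. }
  unfold cint. rewrite (@is_RInt_unique C_R_CompleteNormedModule _ _ _ _ H3). unfold Cdiv. ring.
Qed.

Lemma Cinv_1 : / (RtoC 1) = 1.
Proof. apply C_ext; simpl; field. Qed.

Lemma exG_poly P : isP P -> exG g g' P.
Proof.
  intros HP. apply (exG_ext g g' P (PR P nil)).
  - intros t _. unfold PR; simpl. rewrite Cinv_1. ring.
  - apply exG_PR; auto. intros a t Ha; inversion Ha.
Qed.

Lemma cint_poly P : isP P -> cint g g' P = 0.
Proof.
  intros [L HL]. rewrite (cint_ext g g' P (evL L)) by (intros; apply HL). clear HL.
  induction L as [|p L IH].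
  - rewrite (cint_ext g g' _ (fun u => 0 * (u - 0) ^ 0)) by (intros; simpl; ring).
    rewrite cint_scal; auto. ring. apply exG_poly. apply isP_pow. apply isP_minus. apply isP_id. apply isP_const.
  - rewrite (cint_ext g g' _ (fun u => fst p * (u - 0) ^ snd p + evL L u)) by (intros; simpl; repeat f_equal; ring).
    rewrite cint_plus; auto.
    rewrite IH. rewrite cint_scal; auto. rewrite cint_pow. ring.
    apply exG_poly. apply isP_pow. apply isP_minus. apply isP_id. apply isP_const.
    apply exG_poly. apply isP_mult. apply isP_const. apply isP_pow. apply isP_minus. apply isP_id. apply isP_const.
    apply exG_poly. apply isP_evL.
Qed.

Lemma cint_invpow a m : ong g (a :: nil) -> cint g g' (fun u => / (u - a) ^ (S (S m))) = 0.
Proof.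
  intros Ha.
  assert (Hna : forall t, (0 <= t <= 1)%R -> g t - a <> 0).
  { intros t Ht E. apply (Ha a t (or_introl eq_refl) Ht). apply Ceq_minus; auto. }
  pose proof Hc as [Hd [Hc' Hgg]].
  pose proof (@is_RInt_derive C_R_CompleteNormedModule (fun t => / (g t - a) ^ (S m))
     (fun t => - (RtoC (INR (S m)) * (g t - a) ^ m * g' t) / ((g t - a) ^ (S m) * (g t - a) ^ (S m))) 0 1) as H1.
  assert (H1' : @is_RInt C_R_NormedModule (fun t => - (RtoC (INR (S m)) * (g t - a) ^ m * g' t) / ((g t - a) ^ (S m) * (g t - a) ^ (S m))) 0 1 (RtoC 0)).
  { replace (RtoC 0) with (minus (/ (g 1 - a) ^ (S m)) (/ (g 0 - a) ^ (S m))).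
    apply H1.
    - intros x Hx. rewrite Rmin_left, Rmax_right in Hx by lra.
      apply der_Cinv. apply der_powS. apply der_subc. apply Hd.
      apply Cpow_nz. apply Hna; auto.
    - intros x Hx. rewrite Rmin_left, Rmax_right in Hx by lra.
      unfold Cdiv. apply cont_Cmult.
      apply cont_Copp. apply cont_Cmult; [apply cont_Cmult|].
      apply cont_const. apply cont_pow_comp. apply cont_Cminus. apply (cont_g g g' Hc). apply cont_const.
      apply (cont_g' g g' Hc).
      apply cont_Cinv. apply cont_Cmult; apply cont_pow_comp; apply cont_Cminus; try apply (cont_g g g' Hc); apply cont_const.
      apply Cmult_neq_0; apply Cpow_nz; apply Hna; auto.
    - rewrite Hgg. change (minus ?x ?y) with (Cminus x y). cring. }
  pose proof (is_RInt_Cmult _ _ _ _ (/ - RtoC (INR (S m))) H1') as H2.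
  assert (H3 : @is_RInt C_R_NormedModule (fun t => / (g t - a) ^ (S (S m)) * g' t) 0 1 (RtoC 0)).
  { eapply is_RInt_ext; [|replace (RtoC 0) with (/ - RtoC (INR (S m)) * RtoC 0); [exact H2|ring]].
    intros x Hx. rewrite Rmin_left, Rmax_right in Hx by lra. cbv beta.
    assert (Hq : g x - a <> 0) by (apply Hna; lra).
    assert (HP : (g x - a) ^ m <> 0) by (apply Cpow_nz; auto).
    assert (HI : - RtoC (INR (S m)) <> 0).
    2:{ change (@eq C (/ - RtoC (INR (S m)) * (- (RtoC (INR (S m)) * (g x - a) ^ m * g' x) / ((g x - a) * (g x - a) ^ m * ((g x - a) * (g x - a) ^ m)))) (/ ((g x - a) * ((g x - a) * (g x - a) ^ m)) * g' x)).
        field. repeat split; auto. intro E; apply HI; rewrite E; ring. }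
    intro E. apply (INR_S_nz m). replace (RtoC (INR (S m))) with (- - RtoC (INR (S m))) by ring. rewrite E. ring. }
  unfold cint. rewrite (@is_RInt_unique C_R_CompleteNormedModule _ _ _ _ H3). unfold Cdiv. ring.
Qed.

End FTC.

Definition rmv (a : C) (A : list C) := filter (fun x => if Ceq_dec x a then false else true) A.

Lemma lp_split A a u : lp A u = (u - a) ^ (count_occ Ceq_dec A a) * lp (rmv a A) u.
Proof.
  induction A as [|b A IH]; simpl; [ring|].
  destruct (Ceq_dec b a) as [E|E].
  - subst. simpl. rewrite IH. ring.
  - simpl. rewrite IH. ring.
Qed.

Lemma count_rmv_len A a : (count_occ Ceq_dec A a + length (rmv a A))%nat = length A.
Proof.
  induction A as [|b A IH]; simpl; auto.
  destruct (Ceq_dec b a); simpl; lia.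
Qed.

Lemma In_rmv x a A : In x (rmv a A) -> In x A /\ x <> a.
Proof.
  unfold rmv. rewrite filter_In. intros [H1 H2]. split; auto.
  destruct (Ceq_dec x a); congruence.
Qed.

Lemma key_identity (x X L La Pu Q S Pa : C) :
  x <> 0 -> X <> 0 -> L <> 0 -> La <> 0 ->
  Pu = x * Q + Pa -> L = x * S + La ->
  Pu * / (x * X * L) = Q * / (X * L) + (Pa / La) * / (x * X) - (Pa / La) * (S * / (X * L)).
Proof.
  intros Hx HX HL HLa EP EL. subst Pu.
  assert (E : Pa = Pa * (L * / La) - Pa * x * S * / La).
  { rewrite EL. field. auto. }
  rewrite E at 1. field. repeat split; auto.
Qed.

Section Dlemma.
Variables (g1 g1' g2 g2' : R -> C).
Hypothesis Hc1 : contour g1 g1'.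
Hypothesis Hc2 : contour g2 g2'.

Lemma ong_sub g A B : ong g A -> (forall x, In x B -> In x A) -> ong g B.
Proof. intros H HB a t Ha Ht. apply H; auto. Qed.

Lemma exG_invpow g g' a m : contour g g' -> ong g (a :: nil) -> exG g g' (fun u => / (u - a) ^ m).
Proof.
  intros Hc Ha. apply (exG_ext g g' _ (PR (fun _ => 1) (repeat a m))).
  - intros t _. unfold PR. rewrite lp_repeat. ring.
  - apply exG_PR; auto. apply isP_const. apply (ong_sub g (a::nil)); auto.
    intros x Hx. apply repeat_spec in Hx. subst; left; auto.
Qed.

Lemma cint_lin3 g g' F1 F2 F3 c : contour g g' -> exG g g' F1 -> exG g g' F2 -> exG g g' F3 ->
  cint g g' (fun u => F1 u + c * F2 u - c * F3 u) = cint g g' F1 + c * cint g g' F2 - c * cint g g' F3.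
Proof.
  intros Hc H1 H2 H3.
  rewrite (cint_ext g g' _ (fun u => F1 u + (c * F2 u + (- c) * F3 u))) by (intros; ring).
  rewrite cint_plus, cint_plus, !cint_scal; auto. ring.
  apply exG_scal; auto. apply exG_scal; auto.
  apply exG_plus; apply exG_scal; auto.
Qed.

Lemma claimZ_aux n : forall A, (length A <= n)%nat ->
  ong g1 A -> ong g2 A -> (forall a, In a A -> winding g1 g1' a = winding g2 g2' a) ->
  forall P, isP P -> cint g1 g1' (PR P A) = cint g2 g2' (PR P A).
Proof.
  induction n as [|n IH]; intros A Hlen H1 H2 HW P HP.
  - destruct A; [|simpl in Hlen; lia].
    rewrite (cint_ext g1 g1' _ P), (cint_ext g2 g2' _ P) by (intros; unfold PR; simpl; rewrite Cinv_1; ring).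
    rewrite !cint_poly; auto.
  - destruct A as [|a A'] eqn:EA.
    { apply IH; simpl; auto; lia. }
    rewrite <- EA in *.
    set (m := count_occ Ceq_dec A a).
    set (B := rmv a A).
    assert (Hm : (m >= 1)%nat).
    { unfold m. rewrite EA. simpl. destruct (Ceq_dec a a); [lia|congruence]. }
    destruct m as [|m'] eqn:Em; [lia|].
    assert (HinA : forall x, In x (repeat a m' ++ B) -> In x A).
    { intros x Hx. apply in_app_or in Hx. destruct Hx as [Hx|Hx].
      apply repeat_spec in Hx. rewrite Hx, EA; left; auto.
      apply In_rmv in Hx. tauto. }
    assert (HlenA'' : (length (repeat a m' ++ B) <= n)%nat).
    { rewrite length_app, repeat_length. pose proof (count_rmv_len A a). fold m B in H. rewrite Em in H. lia. }
    assert (HaB : forall x, In x B -> a <> x).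
    { intros x Hx E. apply In_rmv in Hx. destruct Hx; congruence. }
    assert (HLa : lp B a <> 0) by (apply lp_nz; auto).
    destruct (isP_div P a HP) as [Q [HQ EQ]].
    destruct (isP_div (lp B) a (isP_lp B)) as [Sp [HS ES]].
    set (c := P a / lp B a).
    assert (Hdec : forall g g', contour g g' -> ong g A ->
       cint g g' (PR P A) = cint g g' (PR Q (repeat a m' ++ B)) + c * cint g g' (fun u => / (u - a) ^ (S m'))
          - c * cint g g' (PR Sp (repeat a m' ++ B))).
    { intros g g' Hc HA.
      assert (HoA'' : ong g (repeat a m' ++ B)) by (apply (ong_sub g A); auto).
      assert (Hoa : ong g (a :: nil)).
      { apply (ong_sub g A); auto. intros x [Hx|[]]; rewrite <- Hx, EA; left; auto. }
      rewrite <- cint_lin3; auto.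
      2: apply exG_PR; auto.
      2: apply exG_invpow; auto.
      2: apply exG_PR; auto.
      apply cint_ext. intros t Ht.
      assert (Hx : g t - a <> 0).
      { intro E. apply (Hoa a t (or_introl eq_refl) Ht). apply Ceq_minus; auto. }
      assert (HX : (g t - a) ^ m' <> 0) by (apply Cpow_nz; auto).
      assert (HL : lp B (g t) <> 0).
      { apply lp_nz. intros b Hb E. apply (HA b t); auto. apply In_rmv in Hb; tauto. }
      unfold PR. rewrite lp_app, lp_repeat.
      rewrite (lp_split A a). fold m B. rewrite Em. simpl Cpow.
      apply key_identity; auto. }
    rewrite (Hdec g1 g1' Hc1 H1), (Hdec g2 g2' Hc2 H2).
    rewrite (IH _ HlenA'' (ong_sub g1 A _ H1 HinA) (ong_sub g2 A _ H2 HinA)) with (P := Q); auto.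
    rewrite (IH _ HlenA'' (ong_sub g1 A _ H1 HinA) (ong_sub g2 A _ H2 HinA)) with (P := Sp); auto.
    f_equal. f_equal. f_equal.
    destruct m' as [|m''].
    * unfold winding in HW.
      rewrite (cint_ext g1 g1' _ (fun u => / (u - a))) by (intros; simpl; rewrite Cmult_1_r; auto).
      rewrite (cint_ext g2 g2' _ (fun u => / (u - a))) by (intros; simpl; rewrite Cmult_1_r; auto).
      apply HW. rewrite EA; left; auto.
    * rewrite !cint_invpow; auto.
      apply (ong_sub g2 A); auto. intros x [Hx|[]]; rewrite <- Hx, EA; left; auto.
      apply (ong_sub g1 A); auto. intros x [Hx|[]]; rewrite <- Hx, EA; left; auto.
Qed.

Lemma key_identity1 (x L La Pu Q S Pa : C) :
  x <> 0 -> L <> 0 -> La <> 0 ->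
  Pu = x * Q + Pa -> L = x * S + La ->
  Pu * / (x * L) = Q * / L + (Pa / La) * / x - (Pa / La) * (S * / L).
Proof.
  intros Hx HL HLa EP EL. subst Pu.
  assert (E : Pa = Pa * (L * / La) - Pa * x * S * / La).
  { rewrite EL. field. auto. }
  rewrite E at 1. field. repeat split; auto.
Qed.

Lemma claimV A v P : ong g1 (v :: A) -> ong g2 (v :: A) -> ~ In v A ->
  (forall a, In a A -> winding g1 g1' a = winding g2 g2' a) ->
  winding g2 g2' v = winding g1 g1' v + 1 -> isP P ->
  cint g2 g2' (PR P (v :: A)) = cint g1 g1' (PR P (v :: A)) + P v / lp A v.
Proof.
  intros H1 H2 HvA HW Hv HP.
  assert (HLa : lp A v <> 0).
  { apply lp_nz. intros a Ha E. apply HvA. rewrite E; auto. }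
  destruct (isP_div P v HP) as [Q [HQ EQ]].
  destruct (isP_div (lp A) v (isP_lp A)) as [Sp [HS ES]].
  set (c := P v / lp A v).
  assert (Hdec : forall g g', contour g g' -> ong g (v :: A) ->
       cint g g' (PR P (v :: A)) = cint g g' (PR Q A) + c * cint g g' (fun u => / (u - v))
          - c * cint g g' (PR Sp A)).
  { intros g g' Hc HA.
    assert (HoA : ong g A) by (apply (ong_sub g (v :: A)); auto; intros; right; auto).
    assert (Hoa : ong g (v :: nil)) by (apply (ong_sub g (v :: A)); auto; intros x [Hx|[]]; left; auto).
    rewrite <- cint_lin3; auto.
    2: apply exG_PR; auto.
    2: apply (exG_ext g g' _ (fun u => / (u - v) ^ 1)); [intros; simpl; rewrite Cmult_1_r; auto|apply exG_invpow; auto].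
    2: apply exG_PR; auto.
    apply cint_ext. intros t Ht.
    assert (Hx : g t - v <> 0).
    { intro E. apply (Hoa v t (or_introl eq_refl) Ht). apply Ceq_minus; auto. }
    assert (HL : lp A (g t) <> 0) by (apply ong_lp; auto).
    unfold PR. simpl lp. apply key_identity1; auto. }
  rewrite (Hdec g1 g1' Hc1 H1), (Hdec g2 g2' Hc2 H2).
  rewrite (claimZ_aux (length A) A (Nat.le_refl _) (ong_sub g1 (v::A) A H1 (fun x h => in_cons _ _ _ h)) (ong_sub g2 (v::A) A H2 (fun x h => in_cons _ _ _ h)) HW Q HQ).
  rewrite (claimZ_aux (length A) A (Nat.le_refl _) (ong_sub g1 (v::A) A H1 (fun x h => in_cons _ _ _ h)) (ong_sub g2 (v::A) A H2 (fun x h => in_cons _ _ _ h)) HW Sp HS).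
  unfold winding in Hv. rewrite Hv. unfold c. ring.
Qed.

End Dlemma.

Lemma lim_mult {T} (F : (T -> Prop) -> Prop) (FF : Filter F) (f k : T -> C) (x y : C) :
  filterlim f F (@locally C_UniformSpace x) -> filterlim k F (@locally C_UniformSpace y) ->
  filterlim (fun t => f t * k t) F (@locally C_UniformSpace (x * y)).
Proof.
  intros Hf Hk.
  assert (Hf' : filterlim f F (@locally (AbsRing_UniformSpace C_AbsRing) x)).
  { intros P HP. apply Hf. apply locally_C. exact HP. }
  assert (Hk' : filterlim k F (@locally (AbsRing_UniformSpace C_AbsRing) y)).
  { intros P HP. apply Hk. apply locally_C. exact HP. }
  pose proof (filterlim_comp_2 f k (fun a b => @mult C_AbsRing a b) Hf' Hk' (filterlim_mult x y)) as H.
  intros P HP. apply H. apply locally_C. exact HP.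
Qed.

Lemma locally_neq (u d : C) : d <> u -> @locally C_UniformSpace u (fun y => y <> d).
Proof.
  intros Hdu.
  destruct u as [u1 u2], d as [d1 d2].
  destruct (Req_dec d1 u1) as [E1|E1].
  - assert (E2 : d2 <> u2) by (intro; apply Hdu; subst; auto).
    assert (Hp : 0 < Rabs (d2 - u2)) by (apply Rabs_pos_lt; lra).
    exists (mkposreal _ Hp). intros [y1 y2] [_ Hb] E. injection E; intros; subst.
    unfold ball in Hb; simpl in Hb. unfold AbsRing_ball, abs, minus, plus, opp in Hb; simpl in Hb. unfold Rminus in Hb. lra.
  - assert (Hp : 0 < Rabs (d1 - u1)) by (apply Rabs_pos_lt; lra).
    exists (mkposreal _ Hp). intros [y1 y2] [Hb _] E. injection E; intros; subst.
    unfold ball in Hb; simpl in Hb. unfold AbsRing_ball, abs, minus, plus, opp in Hb; simpl in Hb. unfold Rminus in Hb. lra.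
Qed.

Lemma locally_avoid (u : C) (l : list C) :
  @locally C_UniformSpace u (fun y => y <> u -> forall x, In x l -> y <> x).
Proof.
  induction l as [|d l IH].
  - apply filter_forall. intros y _ x [].
  - destruct (Ceq_dec d u) as [E|E].
    + eapply filter_imp; [|exact IH]. intros y H Hy x [Hx|Hx]; [subst; auto|auto].
    + eapply filter_imp; [|apply filter_and; [exact IH|apply (locally_neq u d E)]].
      intros y [H1 H2] Hy x [Hx|Hx]; [subst; auto|auto].
Qed.

Lemma cont_id_C (u : C) : @continuous C_UniformSpace C_UniformSpace (fun y => y) u.
Proof. apply filterlim_id. Qed.

Lemma cont_lp_C (l : list C) (u : C) : @continuous C_UniformSpace C_UniformSpace (lp l) u.
Proof.
  induction l as [|a l IH]; simpl.
  - apply cont_const.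
  - apply (cont_Cmult (fun y => y - a) (lp l)); auto. apply cont_Cminus. apply cont_id_C. apply cont_const.
Qed.

Lemma lp_zero a l : In a l -> lp l a = 0.
Proof.
  induction l as [|b l IH]; simpl; intros H; [destruct H|].
  destruct H as [H|H].
  - subst. ring.
  - rewrite IH; auto. ring.
Qed.

Fixpoint rem1 (a : C) (l : list C) : list C :=
  match l with nil => nil | b :: l' => if Ceq_dec b a then l' else b :: rem1 a l' end.

Lemma lp_rem1 a l u : In a l -> lp l u = (u - a) * lp (rem1 a l) u.
Proof.
  induction l as [|b l IH]; simpl; intros H; [destruct H|].
  destruct (Ceq_dec b a) as [E|E].
  - subst; auto.
  - destruct H as [H|H]; [congruence|]. simpl. rewrite IH; auto. ring.
Qed.

Lemma In_rem1 x a l : In x (rem1 a l) -> In x l.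
Proof.
  induction l as [|b l IH]; simpl; auto.
  destruct (Ceq_dec b a); simpl; intuition.
Qed.

Lemma reduce (Dr Nr : list C) : exists Nr' Dr',
  (forall x, In x Dr' -> In x Dr) /\ (forall x, In x Dr' -> ~ In x Nr') /\
  forall u, (forall x, In x Dr -> u <> x) -> lp Nr u / lp Dr u = lp Nr' u / lp Dr' u.
Proof.
  induction Dr as [|d Dr IH].
  - exists Nr, nil. split; [|split]; simpl; auto; intros x [].
  - destruct IH as [Nr1 [Dr1 [H1 [H2 H3]]]].
    destruct (in_dec Ceq_dec d Nr1) as [Hd|Hd].
    + exists (rem1 d Nr1), Dr1. split; [|split].
      * intros x Hx; right; auto.
      * intros x Hx Hx'. apply (H2 x Hx). eapply In_rem1; eauto.
      * intros u Hu. simpl.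
        assert (Hud : u - d <> 0) by (apply Cminus_eq_contra; apply Hu; left; auto).
        assert (HDr : lp Dr u <> 0) by (apply lp_nz; intros; apply Hu; right; auto).
        assert (HDr1 : lp Dr1 u <> 0) by (apply lp_nz; intros; apply Hu; right; auto).
        transitivity ((lp Nr u / lp Dr u) / (u - d)).
        { field. auto. }
        rewrite H3 by (intros; apply Hu; right; auto).
        rewrite (lp_rem1 d Nr1 u Hd). field. auto.
    + exists Nr1, (d :: Dr1). split; [|split].
      * intros x [Hx|Hx]; [left; auto| right; auto].
      * intros x [Hx|Hx]; [subst; auto| apply H2; auto].
      * intros u Hu. simpl.
        assert (Hud : u - d <> 0) by (apply Cminus_eq_contra; apply Hu; left; auto).
        assert (HDr : lp Dr u <> 0) by (apply lp_nz; intros; apply Hu; right; auto).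
        assert (HDr1 : lp Dr1 u <> 0) by (apply lp_nz; intros; apply Hu; right; auto).
        transitivity ((lp Nr u / lp Dr u) / (u - d)).
        { field. auto. }
        rewrite H3 by (intros; apply Hu; right; auto).
        field. auto.
Qed.

Definition hfunG (f : C -> C) (u : C) : C :=
  match excluded_middle_informative (exists l, has_lim f u l) with
  | left H => proj1_sig (constructive_indefinite_description _ H)
  | right _ => f u
  end.

Lemma lim_restrict (f : C -> C) (u : C) :
  @continuous C_UniformSpace C_UniformSpace f u -> filterlim f (locally' u) (@locally C_UniformSpace (f u)).
Proof.
  intros H P HP. unfold locally', within, filtermap. apply H in HP.
  eapply filter_imp; [|exact HP]. intros; auto.
Qed.

Lemma RatRep (Nr Dr : list C) :
  let f := fun u => lp Nr u / lp Dr u in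
  exists N A, isP N /\ (forall a, In a A -> ~ exists l, has_lim f a l) /\
    (forall u, ~ In u A -> hfunG f u = N u / lp A u).
Proof.
  intros f.
  destruct (reduce Dr Nr) as [Nr' [Dr' [H1 [H2 H3]]]].
  exists (lp Nr'), Dr'. split; [apply isP_lp|split].
  - intros a Ha [l Hl].
    set (g1 := fun y => lp Dr' y * f y).
    assert (L1 : filterlim g1 (locally' a) (@locally C_UniformSpace (lp Dr' a * l))).
    { apply lim_mult. apply within_filter. apply locally_filter.
      apply lim_restrict. apply cont_lp_C. exact Hl. }
    assert (L2 : filterlim g1 (locally' a) (@locally C_UniformSpace (lp Nr' a))).
    { apply (filterlim_ext_loc (lp Nr')).
      - unfold locally', within. eapply filter_imp; [|apply (locally_avoid a Dr)].
        intros y Hy Hya. unfold g1, f. rewrite H3 by (intros x Hx E; apply (Hy Hya x Hx); auto).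
        field. apply lp_nz. intros x Hx E. apply (Hy Hya x (H1 x Hx)); auto.
      - apply lim_restrict. apply cont_lp_C. }
    apply is_C_lim_unique in L1. apply is_C_lim_unique in L2.
    rewrite L1, lp_zero in L2 by auto.
    apply (lp_nz Nr' a). intros x Hx E. subst. apply (H2 x Ha Hx).
    rewrite <- L2. ring.
  - intros u Hu.
    assert (Hl : has_lim f u (lp Nr' u / lp Dr' u)).
    { unfold has_lim.
      apply (filterlim_ext_loc (fun y => lp Nr' y / lp Dr' y)).
      - unfold locally', within. eapply filter_imp; [|apply (locally_avoid u Dr)].
        intros y Hy Hyu. unfold f. rewrite H3; [reflexivity|]. intros x Hx E. apply (Hy Hyu x Hx); auto.
      - apply (lim_restrict (fun y => lp Nr' y / lp Dr' y)).
        apply cont_Cmult. apply cont_lp_C. apply cont_Cinv. apply cont_lp_C.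
        apply lp_nz. intros x Hx E. apply Hu. subst; auto. }
    unfold hfunG. destruct excluded_middle_informative as [He|He].
    + destruct (constructive_indefinite_description _ He) as [l0 Hl0]. simpl.
      apply is_C_lim_unique in Hl0. apply is_C_lim_unique in Hl. congruence.
    + exfalso; apply He; eauto.
Qed.

Definition sumL (L : list (nat * (list C -> C))%type) (u : C) (us : list C) : C :=
  fold_right (fun p acc => u ^ fst p * snd p us + acc) 0 L.

Fixpoint MPol (n : nat) (F : list C -> C) : Prop :=
  match n with
  | O => True
  | S n' => exists L : list (nat * (list C -> C))%type, List.Forall (fun p : nat * (list C -> C) => MPol n' (snd p)) L /\
             forall u us, length us = n' -> F (u :: us) = sumL L u us
  end.

Lemma sumL_app L1 L2 u us : sumL (L1 ++ L2) u us = sumL L1 u us + sumL L2 u us.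
Proof. induction L1; simpl; [ring| rewrite IHL1; ring]. Qed.

Lemma MPol_ext n F G : (forall l, length l = n -> F l = G l) -> MPol n F -> MPol n G.
Proof.
  destruct n as [|n]; simpl; auto.
  intros E [L [HL EL]]. exists L. split; auto. intros u us Hl. rewrite <- E; simpl; auto.
Qed.

Lemma MPol_const n c : MPol n (fun _ => c).
Proof.
  induction n; simpl; auto.
  exists ((0%nat, fun _ => c) :: nil). split. constructor; auto. intros; simpl; ring.
Qed.

Lemma MPol_plus n F G : MPol n F -> MPol n G -> MPol n (fun l => F l + G l).
Proof.
  destruct n as [|n]; simpl; auto.
  intros [L1 [H1 E1]] [L2 [H2 E2]]. exists (L1 ++ L2). split.
  apply Forall_app; auto. intros u us Hl. rewrite sumL_app, E1, E2; auto.
Qed.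

Lemma MPol_scal n c F : MPol n F -> MPol n (fun l => c * F l).
Proof.
  revert c F. induction n as [|n IH]; simpl; auto.
  intros c F [L [H E]]. exists (map (fun p => (fst p, fun us => c * snd p us)) L). split.
  - rewrite Forall_map. eapply Forall_impl; [|exact H]. intros p Hp; simpl. apply IH; auto.
  - intros u us Hl. rewrite E; auto. clear. induction L; simpl; [ring|rewrite <- IHL; ring].
Qed.

Lemma MPol_mult n F G : MPol n F -> MPol n G -> MPol n (fun l => F l * G l).
Proof.
  revert F G. induction n as [|n IH]; simpl; auto.
  intros F G [L1 [H1 E1]] [L2 [H2 E2]].
  exists (flat_map (fun p => map (fun q => ((fst p + fst q)%nat, fun us => snd p us * snd q us)) L2) L1).
  split.
  - apply Forall_flat_map. eapply Forall_impl; [|exact H1]. intros p Hp.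
    rewrite Forall_map. eapply Forall_impl; [|exact H2]. intros q Hq. simpl. apply IH; auto.
  - intros u us Hl. rewrite E1, E2; auto. clear - u us.
    induction L1 as [|p L1 IH]; simpl; [ring|]. rewrite sumL_app, <- IH.
    assert (H : forall L2, sumL (map (fun q => ((fst p + fst q)%nat, fun us => snd p us * snd q us)) L2) u us
             = u ^ fst p * snd p us * sumL L2 u us).
    { clear. induction L2 as [|q L2 IH2]. simpl; ring. simpl. rewrite IH2, Cpow_add. ring. }
    rewrite H. ring.
Qed.

Lemma MPol_sumL n L u : List.Forall (fun p => MPol n (snd p)) L -> MPol n (fun us => sumL L u us).
Proof.
  induction L as [|p L IH]; intros H; simpl.
  - apply MPol_const.
  - inversion H; subst. apply MPol_plus; auto. apply MPol_scal; auto.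
Qed.

Lemma MPol_sub n F u : MPol (S n) F -> MPol n (fun us => F (u :: us)).
Proof.
  intros [L [H E]]. apply (MPol_ext n (fun us => sumL L u us)).
  intros; rewrite E; auto. apply MPol_sumL; auto.
Qed.

Fixpoint ins (j : nat) (v : C) (l : list C) : list C :=
  match j, l with
  | O, _ => v :: l
  | S j', nil => v :: nil
  | S j', x :: l' => x :: ins j' v l'
  end.

Lemma ins_length j v l : length (ins j v l) = S (length l).
Proof. revert l; induction j; intros [|x l]; simpl; auto. Qed.

Lemma MPol_ins j : forall n F v, (j <= n)%nat -> MPol (S n) F -> MPol n (fun us => F (ins j v us)).
Proof.
  induction j as [|j IH]; intros n F v Hj HF.
  - simpl. apply MPol_sub; auto.
  - destruct n as [|n]; [lia|].
    destruct HF as [L [H E]].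
    exists (map (fun p => (fst p, fun us => snd p (ins j v us))) L). split.
    + rewrite Forall_map. eapply Forall_impl; [|exact H]. intros p Hp; simpl. apply IH; auto. lia.
    + intros u us Hl. simpl. rewrite E by (rewrite ins_length; auto).
      clear. induction L; simpl; auto. rewrite IHL; auto.
Qed.

Lemma MPol_proj n i : MPol n (fun us : list C => nth i us (RtoC 0)).
Proof.
  revert i. induction n as [|n IH]; intros i; simpl; auto.
  destruct i as [|i].
  - exists ((1%nat, fun _ => RtoC 1) :: nil). split. constructor; [exact (MPol_const n (RtoC 1))|auto].
    intros; simpl; ring.
  - exists ((0%nat, fun us : list C => nth i us (RtoC 0)) :: nil). split. constructor; [exact (IH i)|auto].
    intros; simpl; ring.
Qed.

Fixpoint cprod (n : nat) (f : nat -> C) : C :=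
  match n with O => 1 | S n' => f O * cprod n' (fun i => f (S i)) end.

Lemma prodC_cprod (F : C -> C) us : prodC (map F us) = cprod (length us) (fun i => F (nth i us 0)).
Proof. induction us; simpl; auto. rewrite IHus; auto. Qed.

Lemma MPol_cprod n m (f : nat -> list C -> C) : (forall i, MPol n (f i)) -> MPol n (fun us => cprod m (fun i => f i us)).
Proof.
  revert f. induction m as [|m IH]; intros f Hf; simpl.
  - apply MPol_const.
  - apply MPol_mult; [auto| apply (IH (fun i => f (S i))); auto].
Qed.

Lemma MPol_minus n F G : MPol n F -> MPol n G -> MPol n (fun l => F l - G l).
Proof.
  intros HF HG. apply (MPol_ext n (fun l => F l + (-1) * G l)). intros; ring.
  apply MPol_plus; auto. apply MPol_scal; auto.
Qed.

Lemma MPol_vdm n : MPol n vdm.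
Proof.
  induction n as [|n IH]; [simpl; auto|].
  assert (H : MPol (S n) (fun l => cprod n (fun i => nth 0 l 0 - nth (S i) l 0) * vdm (tl l))).
  { apply MPol_mult.
    - apply MPol_cprod. intros i. apply MPol_minus; apply MPol_proj.
    - exists ((0%nat, vdm) :: nil). split. constructor; auto. intros; simpl; ring. }
  destruct H as [L [HL E]]. exists L. split; auto.
  intros u us Hl. rewrite <- E; auto. simpl. rewrite prodC_cprod, Hl. auto.
Qed.

Lemma MPol_vdm2 n : MPol n (fun us => vdm us * vdm us).
Proof. apply MPol_mult; apply MPol_vdm. Qed.

Definition Fnl := ((C -> C) -> C)%type.

Fixpoint mI (Ts : list Fnl) (F : list C -> C) : C :=
  match Ts with
  | nil => F nil
  | T :: Ts' => T (fun u => mI Ts' (fun us => F (u :: us)))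
  end.

Lemma mI_ext Ts : forall F G, (forall l, length l = length Ts -> F l = G l) -> mI Ts F = mI Ts G.
Proof.
  induction Ts as [|T Ts IH]; intros F G E; simpl.
  - apply E; auto.
  - f_equal. apply functional_extensionality. intros u. apply IH. intros l Hl. apply E. simpl; auto.
Qed.

Section Weight.
Variable w : C -> C.

Definition W (us : list C) : C := prodC (map w us).

Definition Lin (T : Fnl) :=
  (forall f k, isP f -> isP k -> T (fun u => w u * (f u + k u)) = T (fun u => w u * f u) + T (fun u => w u * k u)) /\
  (forall c f, isP f -> T (fun u => w u * (c * f u)) = c * T (fun u => w u * f u)).

Definition LinMI (Ts : list Fnl) :=
  (forall p q, MPol (length Ts) p -> MPol (length Ts) q ->
     mI Ts (fun us => W us * (p us + q us)) = mI Ts (fun us => W us * p us) + mI Ts (fun us => W us * q us)) /\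
  (forall c p, MPol (length Ts) p -> mI Ts (fun us => W us * (c * p us)) = c * mI Ts (fun us => W us * p us)).

Lemma LinMI_zero Ts : LinMI Ts -> mI Ts (fun us => W us * 0) = 0.
Proof.
  intros [_ Hs].
  rewrite (mI_ext Ts _ (fun us => W us * (0 * 0))) by (intros; ring).
  rewrite Hs by apply MPol_const. ring.
Qed.

Lemma mI_sumL Ts L u : LinMI Ts -> List.Forall (fun p => MPol (length Ts) (snd p)) L ->
  mI Ts (fun us => W us * sumL L u us) = fold_right (fun p acc => u ^ fst p * mI Ts (fun us => W us * snd p us) + acc) 0 L.
Proof.
  intros HL. induction L as [|p L IH]; intros HF; simpl.
  - apply LinMI_zero; auto.
  - inversion HF; subst. destruct HL as [Hp Hs].
    rewrite Hp. rewrite Hs; auto. rewrite IH; auto.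
    apply MPol_scal; auto. apply MPol_sumL; auto.
Qed.

Lemma PolyMI Ts p : LinMI Ts -> MPol (S (length Ts)) p -> isP (fun u => mI Ts (fun us => W us * p (u :: us))).
Proof.
  intros HL [L [HF E]].
  exists (map (fun q => (mI Ts (fun us => W us * snd q us), fst q)) L).
  intros u. rewrite (mI_ext Ts _ (fun us => W us * sumL L u us)) by (intros; rewrite E; auto).
  rewrite mI_sumL; auto. clear. induction L; simpl; auto. rewrite IHL. ring.
Qed.

Lemma peel T Ts p : LinMI Ts -> MPol (S (length Ts)) p ->
  mI (T :: Ts) (fun us => W us * p us) = T (fun u => w u * mI Ts (fun us => W us * p (u :: us))).
Proof.
  intros [Hp Hs] HP. simpl. f_equal. apply functional_extensionality. intros u.
  rewrite <- Hs by (apply MPol_sub; auto).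
  apply mI_ext. intros; unfold W; simpl; ring.
Qed.

Lemma LinMI_all Ts : List.Forall Lin Ts -> LinMI Ts.
Proof.
  induction Ts as [|T Ts IH]; intros HT.
  - split; intros; simpl; ring.
  - inversion HT; subst. specialize (IH H2). destruct H1 as [Tp Ts'].
    split.
    + intros p q Hp Hq. simpl length in *.
      rewrite !peel; auto. 2: apply MPol_plus; auto.
      rewrite <- Tp by (apply PolyMI; auto).
      f_equal. apply functional_extensionality. intros u. f_equal.
      destruct IH as [IHp _]. rewrite <- IHp by (apply MPol_sub; auto). auto.
    + intros c p Hp. simpl length in *.
      rewrite !peel; auto. 2: apply MPol_scal; auto.
      rewrite <- Ts' by (apply PolyMI; auto).
      f_equal. apply functional_extensionality. intros u. f_equal.
      destruct IH as [_ IHs]. rewrite <- IHs by (apply MPol_sub; auto). auto.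
Qed.

End Weight.

Fixpoint csum (f : nat -> C) (n : nat) : C :=
  match n with O => 0 | S n' => csum f n' + f n' end.

Lemma repeat_Sr {X} (x : X) n : repeat x (S n) = repeat x n ++ x :: nil.
Proof. induction n; simpl; auto. rewrite <- IHn. auto. Qed.

Section Tele.
Variables (w : C -> C) (T1 T2 : Fnl) (v rho : C).
Hypothesis HL1 : Lin w T1.
Hypothesis HL2 : Lin w T2.
Hypothesis Rel : forall f, isP f -> T2 (fun u => w u * f u) = T1 (fun u => w u * f u) - rho * f v.

Lemma Dpos Tout : forall Tin p, List.Forall (Lin w) Tout -> List.Forall (Lin w) Tin ->
  MPol (length Tout + S (length Tin)) p ->
  mI (Tout ++ T2 :: Tin) (fun us => W w us * p us) =
  mI (Tout ++ T1 :: Tin) (fun us => W w us * p us) - rho * mI (Tout ++ Tin) (fun us => W w us * p (ins (length Tout) v us)).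
Proof.
  induction Tout as [|T Tout IH]; intros Tin p HTo HTi Hp.
  - simpl app. simpl length in Hp.
    assert (HLi : LinMI w Tin) by (apply LinMI_all; auto).
    rewrite !peel; auto.
    rewrite Rel by (apply PolyMI; auto). simpl ins. auto.
  - inversion HTo; subst.
    simpl app. simpl length in *.
    assert (HL2' : LinMI w (Tout ++ T2 :: Tin)) by (apply LinMI_all; apply Forall_app; split; auto).
    assert (HL1' : LinMI w (Tout ++ T1 :: Tin)) by (apply LinMI_all; apply Forall_app; split; auto).
    assert (HL0 : LinMI w (Tout ++ Tin)) by (apply LinMI_all; apply Forall_app; split; auto).
    assert (Hl2 : length (Tout ++ T2 :: Tin) = (length Tout + S (length Tin))%nat) by (rewrite length_app; simpl; lia).
    assert (Hl1 : length (Tout ++ T1 :: Tin) = (length Tout + S (length Tin))%nat) by (rewrite length_app; simpl; lia).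
    assert (Hl0 : length (Tout ++ Tin) = (length Tout + length Tin)%nat) by (rewrite length_app; simpl; lia).
    assert (Hp' : MPol (S (length (Tout ++ Tin))) (fun us => p (ins (S (length Tout)) v us))).
    { rewrite Hl0. apply (MPol_ins (S (length Tout)) (S (length Tout + length Tin))). lia.
      replace (S (S (length Tout + length Tin))) with (S (length Tout + S (length Tin))) by lia. auto. }
    rewrite (peel w T (Tout ++ T2 :: Tin)); auto. 2: rewrite Hl2; auto.
    rewrite (peel w T (Tout ++ T1 :: Tin)); auto. 2: rewrite Hl1; auto.
    rewrite (peel w T (Tout ++ Tin) (fun us => p (ins (S (length Tout)) v us))); auto.
    destruct H1 as [Tp Ts].
    transitivity (T (fun u => w u * (mI (Tout ++ T1 :: Tin) (fun us => W w us * p (u :: us)) + (- rho) * mI (Tout ++ Tin) (fun us => W w us * p (ins (S (length Tout)) v (u :: us)))))).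
    + f_equal. apply functional_extensionality. intros u. rewrite IH; auto.
      simpl ins. ring. apply MPol_sub. replace (S (length Tout + S (length Tin))) with (S (length Tout) + S (length Tin))%nat by lia. auto.
    + rewrite Tp, Ts. ring.
      apply (PolyMI w (Tout ++ Tin) (fun us => p (ins (S (length Tout)) v us))); auto.
      apply PolyMI; auto. rewrite Hl1; auto.
      apply isP_mult. apply isP_const. apply (PolyMI w (Tout ++ Tin) (fun us => p (ins (S (length Tout)) v us))); auto.
Qed.

Lemma Tele k p : List.Forall (Lin w) (T1 :: T2 :: nil) -> MPol k p -> forall j, (j <= k)%nat ->
  mI (repeat T2 j ++ repeat T1 (k - j)) (fun us => W w us * p us) =
  mI (repeat T1 k) (fun us => W w us * p us)
  - rho * csum (fun i => mI (repeat T2 i ++ repeat T1 (k - 1 - i)) (fun us => W w us * p (ins i v us))) j.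
Proof.
  intros _ Hp. induction j as [|j IH]; intros Hj.
  - simpl. rewrite Nat.sub_0_r. ring.
  - rewrite repeat_Sr, <- app_assoc. simpl app.
    replace (k - j)%nat with (S (k - S j)) in IH by lia.
    simpl repeat in IH.
    rewrite Dpos.
    + rewrite IH by lia. simpl csum. rewrite repeat_length.
      replace (k - 1 - j)%nat with (k - S j)%nat by lia. ring.
    + apply Forall_forall. intros x Hx. apply repeat_spec in Hx. subst; auto.
    + apply Forall_forall. intros x Hx. apply repeat_spec in Hx. subst; auto.
    + rewrite !repeat_length. replace (j + S (k - S j))%nat with k by lia. auto.
Qed.

End Tele.

Fixpoint rootsP (x : C) (k : nat) : list C :=
  match k with O => nil | S k' => (x - RtoC (INR k')) :: rootsP x k' end.

Lemma poch_lp a x k u : a = u - x -> poch a k = lp (rootsP x k) u.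
Proof.
  intros E. induction k as [|k IH]; simpl; auto.
  rewrite IH, E. ring.
Qed.

Lemma hform_lp b c d m1 m2 n1 : exists Nr Dr, forall u, hform b c d m1 m2 n1 u = lp Nr u / lp Dr u.
Proof.
  exists (rootsP (CZ (x1 m1 m2)) c),
    (rootsP (CZ (xcd c d n1) - 1) (Z.to_nat (rhoZ b d m1 n1)) ++
     rootsP (CZ (yd d m1) - 1) (Z.to_nat (SigmaZ c d m1 n1)) ++
     rootsP (CZ (xcd1 c d)) b).
  intros u. unfold hform, QR, Prho, PSigma, QL.
  rewrite !lp_app.
  rewrite (poch_lp _ (CZ (x1 m1 m2)) _ u) by ring.
  rewrite (poch_lp _ (CZ (xcd c d n1) - 1) _ u) by ring.
  rewrite (poch_lp _ (CZ (yd d m1) - 1) _ u) by ring.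
  rewrite (poch_lp _ (CZ (xcd1 c d)) _ u) by ring.
  rewrite Cmult_assoc. auto.
Qed.

Lemma hrep b c d m1 m2 n1 : exists N A, isP N /\
  (forall a, In a A -> is_pole b c d m1 m2 n1 a) /\
  (forall u, ~ In u A -> hfun b c d m1 m2 n1 u = N u / lp A u).
Proof.
  destruct (hform_lp b c d m1 m2 n1) as [Nr [Dr E]].
  assert (Ef : hform b c d m1 m2 n1 = fun u => lp Nr u / lp Dr u) by (apply functional_extensionality; auto).
  destruct (RatRep Nr Dr) as [N [A [HN [HA Hh]]]].
  exists N, A. split; auto. split.
  - intros a Ha. unfold is_pole. rewrite Ef. apply HA; auto.
  - intros u Hu. unfold hfun. cbv zeta. rewrite Ef. apply Hh; auto.
Qed.

Lemma mcint_mI g g' k : forall F, mcint g g' k F = mI (@repeat Fnl (cint g g') k) F.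
Proof.
  induction k as [|k IH]; intros F; simpl; auto.
  f_equal. apply functional_extensionality. intros u. apply IH.
Qed.

Lemma prodC_map_mult (F K : C -> C) us : prodC (map (fun u => F u * K u) us) = prodC (map F us) * prodC (map K us).
Proof. induction us; simpl; [ring|rewrite IHus; ring]. Qed.

Lemma prodC_ins (F : C -> C) j v : forall us, prodC (map F (ins j v us)) = F v * prodC (map F us).
Proof.
  induction j as [|j IH]; intros [|x us]; simpl; auto; try ring.
  rewrite IH. ring.
Qed.

Lemma prodC_sq v us : prodC (map (fun u => (v - u) * (v - u)) us) =
  prodC (map (fun w => v - w) us) * prodC (map (fun w => v - w) us).
Proof. induction us; simpl; [ring|rewrite IHus; ring]. Qed.

Lemma vdm_ins j v : forall us, vdm (ins j v us) * vdm (ins j v us) =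
  prodC (map (fun u => (v - u) * (v - u)) us) * (vdm us * vdm us).
Proof.
  induction j as [|j IH]; intros [|x us].
  - simpl. ring.
  - simpl ins. simpl vdm. rewrite prodC_sq. simpl. ring.
  - simpl. ring.
  - simpl ins. simpl vdm. rewrite prodC_ins.
    transitivity ((x - v) * (x - v) * (prodC (map (fun w => x - w) us) * prodC (map (fun w => x - w) us)) * (vdm (ins j v us) * vdm (ins j v us))).
    ring. rewrite IH. simpl. ring.
Qed.

Lemma csum_const (f : nat -> C) X k : (forall i, (i < k)%nat -> f i = X) -> csum f k = RtoC (INR k) * X.
Proof.
  induction k as [|k IH]; intros Hf; cbn [csum].
  - simpl. ring.
  - rewrite IH by (intros; apply Hf; lia). rewrite Hf by lia.
    rewrite S_INR, RtoC_plus. ring.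
Qed.

Lemma engine (w w' : C -> C) (T1 T2 : Fnl) v rho k :
  Lin w T1 -> Lin w T2 ->
  (forall f, isP f -> T2 (fun u => w u * f u) = T1 (fun u => w u * f u) - rho * f v) ->
  (forall u, w u * ((v - u) * (v - u)) = w' u) ->
  mI (repeat T2 k) (fun us => W w us * (vdm us * vdm us)) =
  mI (repeat T1 k) (fun us => W w us * (vdm us * vdm us))
  - rho * RtoC (INR k) * mI (repeat T1 (k - 1)) (fun us => W w' us * (vdm us * vdm us)).
Proof.
  intros HL1 HL2 Rel Hw.
  assert (Ew' : w' = fun u => w u * ((v - u) * (v - u))) by (apply functional_extensionality; intros; rewrite Hw; auto).
  assert (HLw' : forall T, Lin w T -> Lin w' T).
  { intros T [Tp Ts]. rewrite Ew'. split.
    - intros f k0 Hf Hk.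
      rewrite (functional_extensionality (fun u => w u * ((v - u) * (v - u)) * (f u + k0 u))
        (fun u => w u * ((v - u) * (v - u) * f u + (v - u) * (v - u) * k0 u))) by (intros; ring).
      rewrite Tp. f_equal; f_equal; apply functional_extensionality; intros; ring.
      apply isP_mult; auto. apply isP_mult; apply isP_minus; try apply isP_const; apply isP_id.
      apply isP_mult; auto. apply isP_mult; apply isP_minus; try apply isP_const; apply isP_id.
    - intros c0 f Hf.
      rewrite (functional_extensionality (fun u => w u * ((v - u) * (v - u)) * (c0 * f u))
        (fun u => w u * (c0 * ((v - u) * (v - u) * f u)))) by (intros; ring).
      rewrite Ts. f_equal; f_equal; apply functional_extensionality; intros; ring.
      apply isP_mult; auto. apply isP_mult; apply isP_minus; try apply isP_const; apply isP_id. }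
  assert (Rel' : forall f, isP f -> T2 (fun u => w' u * f u) = T1 (fun u => w' u * f u) - 0 * f v).
  { intros f Hf. rewrite Ew'.
    rewrite (functional_extensionality (fun u => w u * ((v - u) * (v - u)) * f u) (fun u => w u * ((v - u) * (v - u) * f u))) by (intros; ring).
    rewrite Rel. ring.
    apply isP_mult; auto. apply isP_mult; apply isP_minus; try apply isP_const; apply isP_id. }
  pose proof (Tele w T1 T2 v rho HL1 HL2 Rel k (fun us => vdm us * vdm us)) as HT.
  specialize (HT (Forall_cons _ HL1 (Forall_cons _ HL2 (Forall_nil _))) (MPol_vdm2 k) k (Nat.le_refl k)).
  rewrite Nat.sub_diag in HT. simpl repeat in HT at 2. rewrite app_nil_r in HT.
  rewrite HT. rewrite csum_const with (X := mI (repeat T1 (k - 1)) (fun us => W w' us * (vdm us * vdm us))).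
  ring.
  intros i Hi.
  rewrite (mI_ext _ _ (fun us => W w' us * (vdm us * vdm us))).
  - pose proof (Tele w' T1 T2 v 0 (HLw' _ HL1) (HLw' _ HL2) Rel' (k - 1) (fun us => vdm us * vdm us)) as HT'.
    specialize (HT' (Forall_cons _ (HLw' _ HL1) (Forall_cons _ (HLw' _ HL2) (Forall_nil _))) (MPol_vdm2 (k-1)) i ltac:(lia)).
    replace (k - 1 - i)%nat with (k - 1 - i)%nat by lia.
    rewrite HT'. ring.
  - intros l _. rewrite vdm_ins. unfold W. rewrite Ew'. rewrite (prodC_map_mult w (fun u => (v - u) * (v - u))). ring.
Qed.

Lemma Lin_cint g g' w N A' : contour g g' -> isP N -> ong g A' ->
  (forall t, (0 <= t <= 1)%R -> w (g t) = PR N A' (g t)) -> Lin w (cint g g').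
Proof.
  intros Hc HN HA Hw.
  assert (Hex : forall f, isP f -> exG g g' (fun u => w u * f u)).
  { intros f Hf. apply (exG_ext g g' _ (PR (fun u => N u * f u) A')).
    - intros t Ht. rewrite Hw by auto. unfold PR. ring.
    - apply exG_PR; auto. apply isP_mult; auto. }
  split.
  - intros f k Hf Hk. rewrite (cint_ext g g' _ (fun u => w u * f u + w u * k u)) by (intros; ring).
    apply cint_plus; auto.
  - intros c0 f Hf. rewrite (cint_ext g g' _ (fun u => c0 * (w u * f u))) by (intros; ring).
    apply cint_scal; auto.
Qed.

Lemma Rel_cint g g' gv gv' w Nw A' v : contour g g' -> contour gv gv' -> isP Nw ->
  ong g (v :: A') -> ong gv (v :: A') -> ~ In v A' ->
  (forall a, In a A' -> winding g g' a = winding gv gv' a) ->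
  winding gv gv' v = winding g g' v + 1 ->
  (forall t, (0 <= t <= 1)%R -> w (g t) = PR Nw (v :: A') (g t)) ->
  (forall t, (0 <= t <= 1)%R -> w (gv t) = PR Nw (v :: A') (gv t)) ->
  forall f, isP f -> cint gv gv' (fun u => w u * f u) = cint g g' (fun u => w u * f u) - (- (Nw v / lp A' v)) * f v.
Proof.
  intros Hc Hcv HN H1 H2 HvA HW Hv Hw1 Hw2 f Hf.
  rewrite (cint_ext g g' _ (PR (fun u => Nw u * f u) (v :: A'))) by (intros; rewrite Hw1 by auto; unfold PR; ring).
  rewrite (cint_ext gv gv' _ (PR (fun u => Nw u * f u) (v :: A'))) by (intros; rewrite Hw2 by auto; unfold PR; ring).
  rewrite (claimV g g' gv gv' Hc Hcv A' v); auto.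
  2: apply isP_mult; auto.
  unfold Cdiv. ring.
Qed.

Theorem lemma5p3 (b c d m1 m2 n1 n2 : nat)
  (hb : (1 <= b)%nat) (hc : (1 <= c)%nat) (hd : (1 <= d)%nat)
  (hm1 : (1 <= m1)%nat) (hm2 : (1 <= m2)%nat) (hn1 : (1 <= n1)%nat) (hn2 : (1 <= n2)%nat)
  (hmn : (m1 + m2 = n1 + n2)%nat)
  (hr : (d <= b)%nat)
  (hrho : (0 <= rhoZ b d m1 n1)%Z) (hSig : (0 <= SigmaZ c d m1 n1)%Z)
  (v z : C) (hvz : v <> z)
  (hvp : ~ is_pole b c d m1 m2 n1 v) (hzp : ~ is_pole b c d m1 m2 n1 z)
  (hvL : ~ inL b c d v) (hzL : ~ inL b c d z)
  (g g' gv gv' : R -> C)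
  (hG : GammaL b c d m1 m2 n1 v z g g')
  (hGv : GammaLv b c d m1 m2 n1 v z gv gv') :
  let h := hfun b c d m1 m2 n1 in
  let r := (b - d)%nat in
  Omega h g g' r v z =
    Omega h gv gv' r v z + RtoC (INR r) * (z - v) * h v * OmegaP h g g' (r - 1) v z /\
  OmegaM h g g' (S r) v z =
    OmegaM h gv gv' (S r) v z + RtoC (INR (S r)) * (h v / (z - v)) * Omega h g g' r z v.
Proof.
  intros h r.
  destruct (hrep b c d m1 m2 n1) as [N [A [HN [HpA Hh]]]].
  fold h in Hh.
  destruct hG as [Hc [Hav [HwL [Hwv [Hwz Hwp]]]]].
  destruct hGv as [Hcv [Hav' [HwL' [Hwv' [Hwz' Hwp']]]]].
  assert (HvA : ~ In v A) by (intro H; apply hvp; apply HpA; auto).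
  assert (HzA : ~ In z A) by (intro H; apply hzp; apply HpA; auto).
  assert (Hon : forall gg : R -> C, (forall a, is_pole b c d m1 m2 n1 a \/ a = v \/ a = z -> ~ on_contour gg a) ->
            ong gg (v :: z :: A)).
  { intros gg Hav0 a t Ha Ht E. apply (Hav0 a). destruct Ha as [Ha|[Ha|Ha]]; auto.
    exists t; auto. }
  assert (Ho1 := Hon g Hav). assert (Ho2 := Hon gv Hav').
  assert (HoA : forall gg, ong gg (v :: z :: A) -> ong gg (v :: A)).
  { intros gg Ho a t Ha Ht. apply Ho; auto. destruct Ha; [left|right;right]; auto. }
  assert (HW : forall a, In a A -> winding g g' a = winding gv gv' a).
  { intros a Ha. destruct (classic (inL b c d a)) as [HL|HL].
    - rewrite HwL, HwL'; auto.
    - rewrite Hwp, Hwp'; auto. }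
  assert (HWz : forall a, In a (z :: A) -> winding g g' a = winding gv gv' a).
  { intros a [Ha|Ha]; [subst; rewrite Hwz, Hwz'; auto|auto]. }
  assert (Hvw : winding gv gv' v = winding g g' v + 1) by (rewrite Hwv, Hwv'; ring).
  assert (Hlp : forall gg t, ong gg (v :: z :: A) -> (0 <= t <= 1)%R -> lp A (gg t) <> 0).
  { intros gg t Ho Ht. apply lp_nz. intros a Ha E. apply (Ho a t); auto. right; right; auto. }
  assert (Hnv : forall gg t, ong gg (v :: z :: A) -> (0 <= t <= 1)%R -> gg t - v <> 0).
  { intros gg t Ho Ht E. apply (Ho v t); [left; auto|auto|]. apply Ceq_minus; auto. }
  assert (Hnz : forall gg t, ong gg (v :: z :: A) -> (0 <= t <= 1)%R -> gg t - z <> 0).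
  { intros gg t Ho Ht E. apply (Ho z t); [right; left; auto|auto|]. apply Ceq_minus; auto. }
  assert (HhA : forall gg t, ong gg (v :: z :: A) -> (0 <= t <= 1)%R -> h (gg t) = N (gg t) / lp A (gg t)).
  { intros gg t Ho Ht. apply Hh. intro HI. apply (Ho (gg t) t); auto. right; right; auto. }
  assert (Hhv : h v = N v / lp A v) by (apply Hh; auto).
  assert (HlpAv : lp A v <> 0) by (apply lp_nz; intros a Ha E; apply HvA; subst; auto).
  assert (Hvz : v - z <> 0) by (apply Cminus_eq_contra; auto).
  split.
  -
    set (w := fun u => h u * ((z - u) / (v - u))).
    set (w' := fun u => h u * ((v - u) * (z - u))).
    set (Nw := fun u => - (N u * (z - u))).
    assert (HNw : isP Nw).
    { apply isP_opp. apply isP_mult; auto. apply isP_minus. apply isP_const. apply isP_id. }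
    assert (Hwr : forall gg, ong gg (v :: z :: A) -> forall t, (0 <= t <= 1)%R -> w (gg t) = PR Nw (v :: A) (gg t)).
    { intros gg Ho t Ht. unfold w, PR, Nw. rewrite HhA by auto. simpl lp.
      pose proof (Hnv gg t Ho Ht). pose proof (Hlp gg t Ho Ht).
      field. split; auto. split; auto. intro E. apply H. replace (gg t - v) with (- (v - gg t)) by ring. rewrite E; ring. }
    pose proof (engine w w' (cint g g') (cint gv gv') v (- (Nw v / lp A v)) r
      (Lin_cint g g' w Nw (v :: A) Hc HNw (HoA g Ho1) (Hwr g Ho1))
      (Lin_cint gv gv' w Nw (v :: A) Hcv HNw (HoA gv Ho2) (Hwr gv Ho2))
      (Rel_cint g g' gv gv' w Nw A v Hc Hcv HNw (HoA g Ho1) (HoA gv Ho2) HvA HW Hvw (Hwr g Ho1) (Hwr gv Ho2))) as HE.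
    assert (Hw' : forall u, w u * ((v - u) * (v - u)) = w' u).
    { intros u. unfold w, w'. destruct (Ceq_dec u v) as [E|E].
      - subst. ring.
      - field. apply Cminus_eq_contra; auto. }
    specialize (HE Hw').
    unfold Omega, OmegaP. rewrite !mcint_mI.
    change (fun us => prodC (map (fun u => h u * ((z - u) / (v - u))) us) * (vdm us * vdm us))
      with (fun us => W w us * (vdm us * vdm us)).
    change (fun us => prodC (map (fun u => h u * ((v - u) * (z - u))) us) * (vdm us * vdm us))
      with (fun us => W w' us * (vdm us * vdm us)).
    rewrite HE. unfold Nw. rewrite Hhv. field. auto.
  -
    set (w := fun u => h u * (/ (v - u) * / (z - u))).
    set (w' := fun u => h u * ((v - u) / (z - u))).
    assert (Hwr : forall gg, ong gg (v :: z :: A) -> forall t, (0 <= t <= 1)%R -> w (gg t) = PR N (v :: z :: A) (gg t)).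
    { intros gg Ho t Ht. unfold w, PR. rewrite HhA by auto. simpl lp.
      pose proof (Hnv gg t Ho Ht). pose proof (Hlp gg t Ho Ht). pose proof (Hnz gg t Ho Ht).
      field. repeat split; auto.
      intro E. apply H1. replace (gg t - z) with (- (z - gg t)) by ring. rewrite E; ring.
      intro E. apply H. replace (gg t - v) with (- (v - gg t)) by ring. rewrite E; ring. }
    assert (HvzA : ~ In v (z :: A)) by (simpl; intros [E|E]; auto).
    pose proof (engine w w' (cint g g') (cint gv gv') v (- (N v / lp (z :: A) v)) (S r)
      (Lin_cint g g' w N (v :: z :: A) Hc HN Ho1 (Hwr g Ho1))
      (Lin_cint gv gv' w N (v :: z :: A) Hcv HN Ho2 (Hwr gv Ho2))
      (Rel_cint g g' gv gv' w N (z :: A) v Hc Hcv HN Ho1 Ho2 HvzA HWz Hvw (Hwr g Ho1) (Hwr gv Ho2))) as HE.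
    assert (Hw' : forall u, w u * ((v - u) * (v - u)) = w' u).
    { intros u. unfold w, w'. destruct (Ceq_dec u v) as [E|E].
      - subst. unfold Cdiv. ring.
      - unfold Cdiv. set (iz := / (z - u)). field. apply Cminus_eq_contra; auto. }
    specialize (HE Hw').
    unfold Omega, OmegaM. rewrite !mcint_mI.
    change (fun us => prodC (map (fun u => h u * (/ (v - u) * / (z - u))) us) * (vdm us * vdm us))
      with (fun us => W w us * (vdm us * vdm us)).
    change (fun us => prodC (map (fun u => h u * ((v - u) / (z - u))) us) * (vdm us * vdm us))
      with (fun us => W w' us * (vdm us * vdm us)).
    rewrite HE. simpl (S r - 1)%nat. rewrite Nat.sub_0_r. simpl lp. rewrite Hhv.
    field. split; [auto|split; auto]. intro E. apply Hvz. replace (v - z) with (- (z - v)) by ring. rewrite E; ring.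
Qed.
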